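(* Let $A$ be a complete filtered associative algebra over a field $\mathbb{K}$ of characteristic zero, and let $P:A\to A$ be a linear map preserving the filtration, i.e. $P(A_n)\subseteq A_n$ for all $n$. Put $\tilde P:=\mathrm{id}_A-P$. Then there exists a unique (in general non-linear) map $\chi:A_1\to A_1$ such that $(\chi-\mathrm{id}_A)(A_i)\subseteq A_{2i}$ for every $i\ge 1$ and $$\forall a\in A_1:\quad a=C\big(P(\chi(a)),\,\tilde P(\chi(a))\big).$$ Moreover $\chi$ is bijective, and its inverse is $$\chi^{-1}(a)=C\big(P(a),\tilde P(a)\big)=a+\mathrm{BCH}\big(P(a),\tilde P(a)\big),\qquad a\in A_1.$$
   Context: A complete filtered associative algebra is an associative $\mathbb{K}$-algebra $A$ with a decreasing filtration $A=A_0\supseteq A_1\supseteq A_2\supseteq\cdots$ by subalgebras such that $A_mA_n\subseteq A_{m+n}$ and $A\cong\varprojlim A/A_n$. On $A_1$ the maps $\exp:A_1\to 1+A_1$, $\exp(a)=\sum_{n\ge0}a^n/n!$, and $\log:1+A_1\to A_1$, $\log(1+a)=-\sum_{n\ge1}(-a)^n/n$, are mutually inverse bijections. $\mathrm{BCH}(x,y)$ denotes the Baker--Campbell--Hausdorff series, i.e. the element of the free complete algebra $\mathbb{Q}\langle\langle x,y\rangle\rangle$ with $\exp(x)\exp(y)=\exp(x+y+\mathrm{BCH}(x,y))$; it is a series of iterated commutators $[u,v]=uv-vu$ beginning $\tfrac12[x,y]+\tfrac1{12}[x,[x,y]]-\tfrac1{12}[y,[x,y]]+\cdots$. For $u,v\in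 A_1$ put $C(u,v):=u+v+\mathrm{BCH}(u,v)=\log(\exp(u)\exp(v))\in A_1$. *)

(* Defs.v *)
From HB Require Import structures.
From mathcomp Require Import all_boot all_order all_algebra.
From Stdlib Require Import ClassicalEpsilon.
Set Implicit Arguments. Unset Strict Implicit. Unset Printing Implicit Defensive.
Import Order.TTheory GRing.Theory Num.Theory.
Local Open Scope ring_scope.

(* A complete filtered associative K-algebra structure on A, given by the
   decreasing filtration F 0 = A ⊇ F 1 ⊇ F 2 ⊇ ... of subspaces with
   F m * F n ⊆ F (m+n), Hausdorff (∩ F n = 0, injectivity of A -> lim A/A_n)
   and complete (every compatible family in lim A/A_n lifts to A). *)
Record complete_filtration (K : fieldType) (A : algType K)
    (F : nat -> A -> Prop) : Prop := {
  filt_top : forall a, F 0%N a;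
  filt_decr : forall n a, F n.+1 a -> F n a;
  filt_0 : forall n, F n 0;
  filt_add : forall n a b, F n a -> F n b -> F n (a + b);
  filt_scale : forall n (k : K) a, F n a -> F n (k *: a);
  filt_mul : forall m n a b, F m a -> F n b -> F (m + n)%N (a * b);
  filt_sep : forall a, (forall n, F n a) -> a = 0;
  filt_complete : forall x : nat -> A, (forall n, F n (x n.+1 - x n)) ->
      exists l, forall n, F n (l - x n)
}.

Definition series_to (A : zmodType) (F : nat -> A -> Prop) (f : nat -> A) (s : A) :=
  forall n, exists N, forall M, (N <= M)%N -> F n (s - \sum_(k < M) f k).

Definition fsum (A : zmodType) (F : nat -> A -> Prop) (f : nat -> A) : A :=
  epsilon (inhabits 0) (fun s => series_to F f s).

Definition fexp (K : fieldType) (A : algType K) (F : nat -> A -> Prop) (a : A) : A :=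
  fsum F (fun n => (n`!%:R : K)^-1 *: a ^+ n).

(* log (1 + a) = - sum_{n>=1} (-a)^n / n ; flog x is log of x = 1 + (x - 1) *)
Definition flog (K : fieldType) (A : algType K) (F : nat -> A -> Prop) (x : A) : A :=
  - fsum F (fun n => if n is 0%N then 0 else (n%:R : K)^-1 *: (- (x - 1)) ^+ n).

(* C(u, v) = log (exp u exp v) = u + v + BCH(u, v) *)
Definition fC (K : fieldType) (A : algType K) (F : nat -> A -> Prop) (u v : A) : A :=
  flog F (fexp F u * fexp F v).

(* Main.v *)
Require Import Defs.
From HB Require Import structures.
From mathcomp Require Import all_boot all_order all_algebra.
From Stdlib Require Import ClassicalEpsilon.
Import GRing.Theory.
Local Open Scope ring_scope.

Lemma zid4 (V : zmodType) (a b c d : V) : a - b = (a - c) - (b - d) + (c - d).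
Proof. by rewrite opprB -addrA [d - b + _]addrC addrA !subrKA. Qed.

Lemma Fmono {K : fieldType} {A : algType K} {F : nat -> A -> Prop}
  (HF : complete_filtration F) {m n a} : (n <= m)%N -> F m a -> F n a.
Proof.
move=> /subnK <-; elim: (m - n)%N => //= d IH H; apply: IH.
by apply: (filt_decr HF); rewrite -addSn.
Qed.

Lemma FN {K : fieldType} {A : algType K} {F : nat -> A -> Prop}
  (HF : complete_filtration F) n a : F n a -> F n (- a).
Proof. by move=> H; rewrite -scaleN1r; apply: (filt_scale HF). Qed.

Lemma FB {K : fieldType} {A : algType K} {F : nat -> A -> Prop}
  (HF : complete_filtration F) n a b : F n a -> F n b -> F n (a - b).
Proof. by move=> Ha Hb; apply: (filt_add HF) => //; apply: FN. Qed.

Lemma Fsum {K : fieldType} {A : algType K} {F : nat -> A -> Prop}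
  (HF : complete_filtration F) n (I : Type) (r : seq I) (f : I -> A) :
  (forall i, F n (f i)) -> F n (\sum_(i <- r) f i).
Proof.
move=> H; elim: r => [|x r IH]; first by rewrite big_nil; apply: (filt_0 HF).
by rewrite big_cons; apply: (filt_add HF).
Qed.

Lemma Fexp {K : fieldType} {A : algType K} {F : nat -> A -> Prop}
  (HF : complete_filtration F) i x k : F i x -> F (k * i)%N (x ^+ k).
Proof.
move=> Hx; elim: k => [|k IH]; first by rewrite expr0; apply: (filt_top HF).
by rewrite exprS mulSn; apply: (filt_mul HF).
Qed.

Lemma Fpowdiff {K : fieldType} {A : algType K} {F : nat -> A -> Prop}
  (HF : complete_filtration F) j x y k : F 1%N x -> F 1%N y -> F j (x - y) ->
  F (j + k)%N (x ^+ k.+1 - y ^+ k.+1).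
Proof.
move=> Hx Hy Hxy; elim: k => [|k IH]; first by rewrite addn0 !expr1.
have -> : x ^+ k.+2 - y ^+ k.+2 = x * (x ^+ k.+1 - y ^+ k.+1) + (x - y) * y ^+ k.+1.
  by rewrite mulrBr mulrBl addrA subrK -!exprS.
apply: (filt_add HF).
  rewrite addnS -add1n. apply: (filt_mul HF) => //.
by apply: (filt_mul HF) => //; by have := Fexp HF _ _ k.+1 Hy; rewrite muln1.
Qed.

Lemma series_uniq {K : fieldType} {A : algType K} {F : nat -> A -> Prop}
  (HF : complete_filtration F) f s s' : series_to F f s -> series_to F f s' -> s = s'.
Proof.
move=> H1 H2; apply/eqP; rewrite -subr_eq0; apply/eqP; apply: (filt_sep HF) => n.
have [N1 HN1] := H1 n; have [N2 HN2] := H2 n.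
have -> : s - s' = (s - \sum_(k < maxn N1 N2) f k) - (s' - \sum_(k < maxn N1 N2) f k).
  by rewrite opprB addrA subrK.
by apply: FB => //; [apply: HN1; rewrite leq_maxl | apply: HN2; rewrite leq_maxr].
Qed.

Lemma fsum_eq {K : fieldType} {A : algType K} {F : nat -> A -> Prop}
  (HF : complete_filtration F) f s : series_to F f s -> fsum F f = s.
Proof.
move=> H; rewrite /fsum; apply: (series_uniq HF) => //.
by apply: (epsilon_spec (inhabits 0) (fun s => series_to F f s)); exists s.
Qed.

Lemma series_conv {K : fieldType} {A : algType K} {F : nat -> A -> Prop}
  (HF : complete_filtration F) f : (forall n, F n (f n)) -> exists s, series_to F f s.
Proof.
move=> Hf.
have Htail : forall n d, F n (\sum_(k < n + d) f k - \sum_(k < n) f k).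
  move=> n; elim=> [|d IH]; first by rewrite addn0 subrr; apply: (filt_0 HF).
  rewrite addnS big_ord_recr /= addrAC; apply: (filt_add HF) => //.
  by apply: Fmono (Hf _) => //; rewrite leq_addr.
have Hstep : forall n, F n (\sum_(k < n.+1) f k - \sum_(k < n) f k).
  by move=> n; rewrite big_ord_recr /= addrAC subrr add0r; exact: Hf.
have [l Hl] := @filt_complete _ _ _ HF (fun n => \sum_(k < n) f k) Hstep.
exists l => n; exists n => M HM.
rewrite -(subnKC HM).
have -> : l - \sum_(k < n + (M - n)) f k =
   (l - \sum_(k < n) f k) - (\sum_(k < n + (M - n)) f k - \sum_(k < n) f k).
  by rewrite opprB addrA subrK.
by apply: FB => //; apply: Hl.
Qed.
Definition hx {K : fieldType} {A : algType K} (c : nat -> K) (x : A) k := c k.+2 *: x ^+ k.+2.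

Lemma hx_F {K : fieldType} {A : algType K} {F : nat -> A -> Prop}
  (HF : complete_filtration F) c x i k : F i x -> F (2 * i)%N (hx c x k).
Proof.
move=> Hx; apply: (filt_scale HF); apply: (Fmono HF) (Fexp HF _ _ k.+2 Hx).
by rewrite leq_mul2r orbT.
Qed.

Lemma tail_conv {K : fieldType} {A : algType K} {F : nat -> A -> Prop}
  (HF : complete_filtration F) c x : F 1%N x -> exists l, series_to F (hx c x) l.
Proof.
move=> Hx; apply: (series_conv HF) => n; apply: (filt_scale HF).
apply: (Fmono HF) (Fexp HF _ _ n.+2 Hx); rewrite muln1; exact: leqW (leqnSn n).
Qed.

Lemma tail_est1 {K : fieldType} {A : algType K} {F : nat -> A -> Prop}
  (HF : complete_filtration F) c x i l : F i x -> series_to F (hx c x) l ->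
  F (2 * i)%N l.
Proof.
move=> Hx Hl; have [N HN] := Hl (2 * i)%N.
rewrite -[l](subrK (\sum_(k < N) hx c x k)); apply: (filt_add HF); first exact: HN.
by apply: (Fsum HF) => k; apply: hx_F.
Qed.

Lemma tail_est2 {K : fieldType} {A : algType K} {F : nat -> A -> Prop}
  (HF : complete_filtration F) c x y j l l' : F 1%N x -> F 1%N y -> F j (x - y) ->
  series_to F (hx c x) l -> series_to F (hx c y) l' -> F j.+1 (l - l').
Proof.
move=> Hx Hy Hxy Hl Hl'.
have [N1 HN1] := Hl j.+1; have [N2 HN2] := Hl' j.+1.
set M := maxn N1 N2.
rewrite (@zid4 _ l l' (\sum_(k < M) hx c x k) (\sum_(k < M) hx c y k)).
apply: (filt_add HF).
  by apply: FB => //; [apply: HN1; rewrite leq_maxl | apply: HN2; rewrite leq_maxr].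
rewrite -sumrB; apply: (Fsum HF) => k; rewrite /hx -scalerBr; apply: (filt_scale HF).
by apply: (Fmono HF) (Fpowdiff HF _ _ _ k.+1 Hx Hy Hxy); rewrite addnS ltnS leq_addr.
Qed.

Lemma shift2 {K : fieldType} {A : algType K} {F : nat -> A -> Prop}
  (HF : complete_filtration F) (f : nat -> A) t :
  series_to F (fun k => f k.+2) t -> series_to F f (t + f 0%N + f 1%N).
Proof.
move=> H n; have [N HN] := H n; exists N.+2 => M HM.
have HM' : M = (M - 2).+2 by rewrite -addn2 subnK // (leq_trans _ HM).
rewrite HM' big_ord_recl big_ord_recl /=.
have -> : t + f 0%N + f 1%N - (f 0%N + (f 1%N + \sum_(i < M - 2) f (bump 0 (bump 0 i))))
   = t - \sum_(i < M - 2) f i.+2.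
  by rewrite [f 0%N + (_ + _)]addrA -[t + _ + _]addrA addrKA.
by apply: HN; rewrite -ltnS -ltnS -HM'.
Qed.

Lemma sub_add (V : zmodType) (a a' b b' : V) : (a - a') + (b - b') = (a + b) - (a' + b').
Proof. by rewrite addrACA opprD. Qed.
Lemma zidD (V : zmodType) (a b p L a' b' p' L' : V) :
  a + b + p - L - (a' + b' + p' - L') = (a - a') + (b - b') + (p - p') - (L - L').
Proof. by rewrite [- (L - L')]opprD !sub_add. Qed.
Lemma zid1 (V : zmodType) (u a v b p L : V) :
  (u + a) + (v + b) + p - L - (u + v) = a + b + p - L.
Proof.
rewrite [u + a + _]addrACA. set W := u + v. rewrite addrAC.
by rewrite [W + _ + p - W]addrAC [W + _ - W]addrAC subrr add0r.
Qed.
Lemma zprod (V : ringType) (X Y : V) : (1 + X) * (1 + Y) = 1 + (X + Y + X * Y).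
Proof. by rewrite mulrDl !mulrDr !mul1r mulr1 -!addrA [Y + (X + _)]addrCA. Qed.
Lemma mul_diff (V : ringType) (X Y X' Y' : V) :
  X * Y - X' * Y' = (X - X') * Y + X' * (Y - Y').
Proof. by rewrite mulrBl mulrBr subrKA. Qed.

Definition cE {K : fieldType} (n : nat) : K := (n`!%:R)^-1.
Definition cL {K : fieldType} (n : nat) : K := (n%:R)^-1.

Lemma fexp_eq {K : fieldType} {A : algType K} {F : nat -> A -> Prop}
  (HF : complete_filtration F) u l : series_to F (hx cE u) l -> fexp F u = 1 + (u + l).
Proof.
move=> H; rewrite /fexp; apply: (fsum_eq HF).
have := @shift2 _ _ _ HF (fun n => (n`!%:R : K)^-1 *: u ^+ n) _ H.
have -> : 1 + (u + l) = l + (0`!%:R : K)^-1 *: u ^+ 0 + (1`!%:R : K)^-1 *: u ^+ 1 => //.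
by rewrite fact0 invr1 scale1r expr0 expr1 scale1r [l + 1]addrC -addrA [l + u]addrC.
Qed.

Lemma flog_eq1 {K : fieldType} {A : algType K} {F : nat -> A -> Prop}
  (HF : complete_filtration F) w l : series_to F (hx cL (- w)) l -> flog F (1 + w) = w - l.
Proof.
have e : 1 + w - 1 = w by rewrite addrC addKr.
rewrite -{1}e => H; rewrite /flog.
rewrite (fsum_eq HF _ _ (@shift2 _ _ _ HF
   (fun n => if n is 0%N then 0 else (n%:R : K)^-1 *: (- (1 + w - 1)) ^+ n) _ H)) /= e.
by rewrite invr1 scale1r expr1 addr0 opprD opprK addrC.
Qed.

Lemma fC_decomp {K : fieldType} {A : algType K} {F : nat -> A -> Prop}
  (HF : complete_filtration F) u v : F 1%N u -> F 1%N v ->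
  exists Eu Ev L,
  [/\ series_to F (hx cE u) Eu, series_to F (hx cE v) Ev,
      series_to F (hx cL (- ((u + Eu) + (v + Ev) + (u + Eu) * (v + Ev)))) L &
      fC F u v = (u + Eu) + (v + Ev) + (u + Eu) * (v + Ev) - L].
Proof.
move=> Hu Hv.
have [Eu HEu] := tail_conv HF cE _ Hu; have [Ev HEv] := tail_conv HF cE _ Hv.
have HX : F 1%N (u + Eu).
  by apply: (filt_add HF) => //; apply: (Fmono HF) (tail_est1 HF _ _ _ _ Hu HEu).
have HY : F 1%N (v + Ev).
  by apply: (filt_add HF) => //; apply: (Fmono HF) (tail_est1 HF _ _ _ _ Hv HEv).
have Hw : F 1%N (- ((u + Eu) + (v + Ev) + (u + Eu) * (v + Ev))).
  apply: (FN HF); apply: (filt_add HF); first exact: (filt_add HF).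
  by apply: (Fmono HF) (filt_mul HF HX HY).
have [L HL] := tail_conv HF cL _ Hw.
exists Eu, Ev, L; split => //.
by rewrite /fC (fexp_eq HF _ _ HEu) (fexp_eq HF _ _ HEv) zprod (flog_eq1 HF _ _ HL).
Qed.

Lemma C_est1 {K : fieldType} {A : algType K} {F : nat -> A -> Prop}
  (HF : complete_filtration F) u v i : (1 <= i)%N -> F i u -> F i v ->
  F (2 * i)%N (fC F u v - (u + v)).
Proof.
move=> Hi Hu Hv.
have [Eu [Ev [L [HEu HEv HL ->]]]] :=
  fC_decomp HF _ _ (Fmono HF Hi Hu) (Fmono HF Hi Hv).
rewrite zid1.
have HEu' := tail_est1 HF _ _ _ _ Hu HEu; have HEv' := tail_est1 HF _ _ _ _ Hv HEv.
have le2 : (i <= 2 * i)%N by rewrite leq_pmull.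
have HX : F i (u + Eu) by apply: (filt_add HF) => //; apply: (Fmono HF) HEu'.
have HY : F i (v + Ev) by apply: (filt_add HF) => //; apply: (Fmono HF) HEv'.
have HXY : F (2 * i)%N ((u + Eu) * (v + Ev)) by rewrite mul2n -addnn; apply: (filt_mul HF).
apply: FB => //; first by apply: (filt_add HF) => //; apply: (filt_add HF).
apply: (tail_est1 HF _ _ _ _ _ HL); apply: (FN HF).
by apply: (filt_add HF); [apply: (filt_add HF) | apply: (Fmono HF) HXY].
Qed.

Lemma C_est2 {K : fieldType} {A : algType K} {F : nat -> A -> Prop}
  (HF : complete_filtration F) u v u' v' j :
  F 1%N u -> F 1%N v -> F 1%N u' -> F 1%N v' -> F j (u - u') -> F j (v - v') ->
  F j.+1 ((fC F u v - (u + v)) - (fC F u' v' - (u' + v'))).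
Proof.
move=> Hu Hv Hu' Hv' Hdu Hdv.
have [Eu [Ev [L [HEu HEv HL ->]]]] := fC_decomp HF _ _ Hu Hv.
have [Eu' [Ev' [L' [HEu' HEv' HL' ->]]]] := fC_decomp HF _ _ Hu' Hv'.
rewrite !zid1 zidD.
have Hdu2 := tail_est2 HF _ _ _ _ _ _ Hu Hu' Hdu HEu HEu'.
have Hdv2 := tail_est2 HF _ _ _ _ _ _ Hv Hv' Hdv HEv HEv'.
have F1E : forall x E, F 1%N x -> series_to F (hx cE x) E -> F 1%N (x + E).
  move=> x E Hx HE; apply: (filt_add HF) => //.
  exact: (Fmono HF) (tail_est1 HF _ _ _ _ Hx HE).
have HX := F1E _ _ Hu HEu; have HY := F1E _ _ Hv HEv.
have HX' := F1E _ _ Hu' HEu'; have HY' := F1E _ _ Hv' HEv'.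
have HdX : F j ((u + Eu) - (u' + Eu')).
  by rewrite -sub_add; apply: (filt_add HF) => //; apply: (Fmono HF) Hdu2.
have HdY : F j ((v + Ev) - (v' + Ev')).
  by rewrite -sub_add; apply: (filt_add HF) => //; apply: (Fmono HF) Hdv2.
have HdP : F j.+1 ((u + Eu) * (v + Ev) - (u' + Eu') * (v' + Ev')).
  rewrite mul_diff; apply: (filt_add HF).
    by rewrite -addn1; apply: (filt_mul HF).
  by rewrite -add1n; apply: (filt_mul HF).
apply: FB => //; first by apply: (filt_add HF) => //; apply: (filt_add HF).
have Hw : forall x y : A, F 1%N x -> F 1%N y -> F 1%N (- (x + y + x * y)).
  move=> x y Hx Hy; apply: (FN HF); apply: (filt_add HF); first exact: (filt_add HF).
  by apply: (Fmono HF) (filt_mul HF Hx Hy).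
apply: (tail_est2 HF _ _ _ _ _ _ (Hw _ _ HX HY) (Hw _ _ HX' HY') _ HL HL').
rewrite -opprD -sub_add -sub_add; apply: (FN HF).
by apply: (filt_add HF); [apply: (filt_add HF) | apply: (Fmono HF) HdP].
Qed.

Lemma zidL (V : zmodType) (p c l d : V) : p - c = (l - (c - d)) + ((p - l) - d).
Proof. by rewrite opprB [p - l - d]addrAC addrCA [l + _ - l]addrAC subrr add0r subrKA. Qed.
Lemma zidI (V : zmodType) (a b q : V) : a - b = - ((q - a) - (q - b)).
Proof. by rewrite opprB opprB [q - b + _]addrC subrKA. Qed.
Lemma zidS (V : zmodType) (c d0 d1 : V) : (c - d1) - (c - d0) = d0 - d1.
Proof. by rewrite opprB [c - d1 + _]addrC subrKA. Qed.

Lemma sep_eq {K : fieldType} {A : algType K} {F : nat -> A -> Prop}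
  (HF : complete_filtration F) (a b : A) : (forall n, F n (a - b)) -> a = b.
Proof. by move=> H; apply/eqP; rewrite -subr_eq0; apply/eqP; apply: (filt_sep HF). Qed.

Lemma Phi_inj {K : fieldType} {A : algType K} {F : nat -> A -> Prop}
  (HF : complete_filtration F) (Phi : A -> A)
  (H2 : forall j a b, F 1%N a -> F 1%N b -> F j (a - b) ->
          F j.+1 ((Phi a - a) - (Phi b - b))) :
  forall a b, F 1%N a -> F 1%N b -> Phi a = Phi b -> a = b.
Proof.
move=> a b Ha Hb E; apply: (sep_eq HF); elim=> [|n IH]; first exact: (filt_top HF).
by rewrite (@zidI _ a b (Phi a)) {2}E; apply: (FN HF); apply: H2.
Qed.

Lemma Phi_surj {K : fieldType} {A : algType K} {F : nat -> A -> Prop}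
  (HF : complete_filtration F) (Phi : A -> A)
  (H1 : forall a, F 1%N a -> F 2%N (Phi a - a))
  (H2 : forall j a b, F 1%N a -> F 1%N b -> F j (a - b) ->
          F j.+1 ((Phi a - a) - (Phi b - b))) :
  forall c, F 1%N c -> exists2 a, F 1%N a & Phi a = c.
Proof.
move=> c Hc.
pose f := fun y => c - (Phi y - y).
pose x := fun n => iter n f c.
have Hx1 : forall n, F 1%N (x n).
  elim=> [|n IH] //; rewrite /x iterS -/(x n) /f.
  by apply: FB => //; apply: (Fmono HF) (H1 _ IH).
have Hstep : forall n, F n (x n.+1 - x n).
  elim=> [|n IH]; first exact: (filt_top HF).
  rewrite /x !iterS -/(x n) -iterS -/(x n.+1) /f zidS.
  apply: H2 => //; rewrite -opprB; exact: (FN HF).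
have [l Hl] := @filt_complete _ _ _ HF x Hstep.
have Hl1 : F 1%N l.
  by rewrite -(subrK (x 1%N) l); apply: (filt_add HF) => //; apply: Hl.
exists l => //; apply: (sep_eq HF) => n.
rewrite (@zidL _ (Phi l) c l (Phi (x n) - x n)); apply: (filt_add HF).
  have -> : c - (Phi (x n) - x n) = x n.+1 by rewrite /x iterS.
  by apply: (filt_decr HF); apply: Hl.
by apply: (filt_decr HF); apply: H2 => //; apply: Hl.
Qed.

Theorem proposition2p1 (K : fieldType) (A : algType K) (F : nat -> A -> Prop)
  (P : {linear A -> A}) :
  [pchar K] =i pred0 ->
  complete_filtration F ->
  (forall n a, F n a -> F n (P a)) ->
  exists chi : A -> A,
    ((forall a, F 1%N a -> F 1%N (chi a)) /\
     (forall i a, (1 <= i)%N -> F i a -> F (2 * i)%N (chi a - a)) /\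
     (forall a, F 1%N a -> a = fC F (P (chi a)) (chi a - P (chi a)))) /\
    (forall chi' : A -> A,
       (forall a, F 1%N a -> F 1%N (chi' a)) ->
       (forall i a, (1 <= i)%N -> F i a -> F (2 * i)%N (chi' a - a)) ->
       (forall a, F 1%N a -> a = fC F (P (chi' a)) (chi' a - P (chi' a))) ->
       forall a, F 1%N a -> chi' a = chi a) /\
    (forall a b, F 1%N a -> F 1%N b -> chi a = chi b -> a = b) /\
    (forall b, F 1%N b -> exists2 a, F 1%N a & chi a = b) /\
    (forall a, F 1%N a ->
       F 1%N (fC F (P a) (a - P a)) /\ chi (fC F (P a) (a - P a)) = a).
Proof.
move=> _ HF HP.
pose Phi := fun a => fC F (P a) (a - P a).
have H1 : forall i a, (1 <= i)%N -> F i a -> F (2 * i)%N (Phi a - a).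
  move=> i a Hi Ha.
  have := C_est1 HF (P a) (a - P a) i Hi (HP _ _ Ha) (FB HF _ _ _ Ha (HP _ _ Ha)).
  by rewrite subrKC.
have H2 : forall j a b, F 1%N a -> F 1%N b -> F j (a - b) ->
          F j.+1 ((Phi a - a) - (Phi b - b)).
  move=> j a b Ha Hb Hab.
  have HPab : F j (P a - P b) by rewrite -linearB; apply: HP.
  have := C_est2 HF (P a) (a - P a) (P b) (b - P b) j (HP _ _ Ha)
    (FB HF _ _ _ Ha (HP _ _ Ha)) (HP _ _ Hb) (FB HF _ _ _ Hb (HP _ _ Hb)) HPab.
  rewrite !subrKC; apply.
  by rewrite -sub_add; apply: (filt_add HF) => //; rewrite -opprD; apply: (FN HF).
have H1' : forall a, F 1%N a -> F 2%N (Phi a - a) by move=> a; apply: H1.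
have PhiF1 : forall a, F 1%N a -> F 1%N (Phi a).
  move=> a Ha; rewrite -(subrK a (Phi a)); apply: (filt_add HF) => //.
  exact: (Fmono HF) (H1' _ Ha).
have inj := Phi_inj HF Phi H2.
have surj := Phi_surj HF Phi H1' H2.
pose chi := fun b => epsilon (inhabits b) (fun a => F 1%N a /\ Phi a = b).
have spec : forall b, F 1%N b -> F 1%N (chi b) /\ Phi (chi b) = b.
  move=> b Hb; apply: (epsilon_spec (inhabits b) (fun a => F 1%N a /\ Phi a = b)).
  by have [a Ha E] := surj b Hb; exists a.
have chiPhi : forall a, F 1%N a -> chi (Phi a) = a.
  move=> a Ha; have [H E] := spec _ (PhiF1 _ Ha); exact: inj.
exists chi; split; [split; [|split]|split; [|split; [|split]]].
- by move=> a Ha; case: (spec a Ha).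
- move=> i a Hi Ha.
  have [Hb E] := spec a (Fmono HF Hi Ha).
  set b := chi a in Hb E *.
  have Hbm : forall m, (m.+1 <= i)%N -> F m.+1 b.
    elim=> [|m IH] Hm //.
    have Hb' := IH (ltnW Hm).
    have eb : b = a - (Phi b - b) by rewrite -{1}E subKr.
    rewrite eb; apply: (FB HF).
      by apply: (Fmono HF) Ha.
    apply: (Fmono HF) (H1 _ _ (ltn0Sn m) Hb'); rewrite mul2n -addnn addSn ltnS.
    by rewrite addnS ltnS leq_addr.
  have Hbi : F i b by rewrite -(prednK Hi); apply: Hbm; rewrite prednK.
  by rewrite -E -opprB; apply: (FN HF); apply: H1.
- by move=> a Ha; case: (spec a Ha).
- move=> chi' Hc1 _ Hc3 a Ha; apply: inj; [exact: Hc1 | by case: (spec a Ha) |].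
  have [_ E] := spec a Ha; rewrite E; exact: (esym (Hc3 a Ha)).
- move=> a b Ha Hb E.
  by have [_ Ea] := spec a Ha; have [_ Eb] := spec b Hb; rewrite -Ea -Eb E.
- move=> b Hb; exists (Phi b); first exact: PhiF1.
  exact: chiPhi.
- by move=> a Ha; split; [exact: PhiF1 | exact: chiPhi].
Qed.
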